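(* Let $\lambda>0$, $\gamma>0$, and let $\beta_1=\beta_1(\gamma)$ be the unique positive solution of $\frac{\sqrt\pi}{2}\gamma x(1+x)^{1/2}(3+x)=1$. Let $X$ be the Banach space of bounded analytic functions $h:[0,\lambda]\to\mathbb{R}$ with the supremum norm $\|\cdot\|_\infty$, $K=\{h\in X: h\ge 0,\ \|h\|_\infty\le 1\}$, and for $\beta\ge0$ and $h\in K$ let $\Psi_h=1+\beta h$, $$D_h=\gamma\left(1+\gamma\int_0^\lambda\frac{\exp\left(-2\int_0^x\frac{\xi}{\Psi_h(\xi)}d\xi\right)}{\Psi_h(x)}\,dx\right)^{-1},$$ $$(\tau h)(\eta)=D_h\left(\frac1\gamma+\int_0^\eta\frac{\exp\left(-2\int_0^x\frac{\xi}{\Psi_h(\xi)}d\xi\right)}{\Psi_h(x)}\,dx\right),\quad 0<\eta<\lambda.$$ If $0\le\beta<\beta_1$, then $\tau$ is a contraction on $(K,\|\cdot\|_\infty)$. *)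

(* Defs.v *)
From Stdlib Require Import Reals Lra.
From Coquelicot Require Import Coquelicot.
Open Scope R_scope.

Definition analytic_on (a b : R) (h : R -> R) : Prop :=
  forall x0, a <= x0 <= b ->
    exists (c : nat -> R) (r : R), 0 < r /\
      forall x, a <= x <= b -> Rabs (x - x0) < r -> is_pseries c (x - x0) (h x).

Definition inX (lambda : R) (h : R -> R) : Prop :=
  analytic_on 0 lambda h /\
  exists M, forall x, 0 <= x <= lambda -> Rabs (h x) <= M.

Definition inK (lambda : R) (h : R -> R) : Prop :=
  inX lambda h /\ forall x, 0 <= x <= lambda -> 0 <= h x /\ Rabs (h x) <= 1.

Definition Psi (beta : R) (h : R -> R) (x : R) : R := 1 + beta * h x.

Definition G (beta : R) (h : R -> R) (x : R) : R :=
  exp (-2 * RInt (fun xi => xi / Psi beta h xi) 0 x) / Psi beta h x.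

Definition D (gamma lambda beta : R) (h : R -> R) : R :=
  gamma * / (1 + gamma * RInt (G beta h) 0 lambda).

Definition tau (gamma lambda beta : R) (h : R -> R) (eta : R) : R :=
  D gamma lambda beta h * (1 / gamma + RInt (G beta h) 0 eta).

(* Main.v *)
Require Import Defs.
From Stdlib Require Import Reals Lra Lia.
From Coquelicot Require Import Coquelicot.
Open Scope R_scope.

Lemma cvdisk_radius a x : CV_disk a x -> Rbar_le (Rabs x) (CV_radius a).
Proof.
  intros H. unfold CV_radius. destruct (Lub_Rbar_correct (CV_disk a)) as [Hub _].
  apply Hub. apply CV_disk_le with x; [rewrite Rabs_Rabsolu; lra| exact H].
Qed.

Lemma radius_of_bound c C B : 0 < B -> (forall n, Rabs (c n) <= C * B ^ n) ->
  Rbar_le (/(2*B)) (CV_radius c).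
Proof.
  intros HB Hc.
  replace (/(2*B)) with (Rabs (/(2*B))) by (rewrite Rabs_pos_eq; [reflexivity| apply Rlt_le, Rinv_0_lt_compat; lra]).
  apply cvdisk_radius. unfold CV_disk.
  apply (@ex_series_le R_AbsRing R_CompleteNormedModule _ (fun n => C * (/2)^n)).
  - intros n. change norm with Rabs. simpl. rewrite Rabs_Rabsolu, Rabs_mult, <- RPow_abs.
    rewrite (Rabs_pos_eq (/(2*B))) by (apply Rlt_le, Rinv_0_lt_compat; lra).
    replace ((/2)^n) with (B^n * (/(2*B))^n).
    + rewrite <- Rmult_assoc. apply Rmult_le_compat_r; [apply pow_le; apply Rlt_le, Rinv_0_lt_compat; lra| apply Hc].
    + rewrite <- Rpow_mult_distr. f_equal. field. lra.
  - eexists. apply (@is_series_scal_l R_AbsRing R_NormedModule C). apply is_series_geom. rewrite Rabs_pos_eq; lra.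
Qed.

Lemma term_le_series u n : (forall k, 0 <= u k) -> ex_series u -> u n <= Series u.
Proof.
  intros Hp [l Hl]. rewrite (is_series_unique _ _ Hl).
  apply is_series_Reals in Hl.
  apply Rle_trans with (sum_f_R0 u n).
  - destruct n; simpl; [lra|]. pose proof (cond_pos_sum u n Hp). lra.
  - apply sum_incr; [exact Hl| exact Hp].
Qed.

Lemma coef_bound a : Rbar_lt 0 (CV_radius a) ->
  exists A R, 0 <= A /\ 0 < R /\ forall n, Rabs (a n) <= A * R ^ n.
Proof.
  intros Hr.
  assert (exists rho, 0 < rho /\ Rbar_lt (Rabs rho) (CV_radius a)) as [rho [Hrho Hlt]].
  { destruct (CV_radius a) as [r| |] eqn:E; simpl in Hr.
    - exists (r/2). rewrite Rabs_pos_eq by lra. simpl. lra.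
    - exists 1. split; [lra| exact I].
    - contradiction. }
  pose proof (CV_disk_inside _ _ Hlt) as Hs.
  exists (Series (fun n => Rabs (a n * rho ^ n))), (/rho). repeat split.
  - apply Rle_trans with (Rabs (a 0%nat * rho ^ 0)); [apply Rabs_pos|].
    apply (term_le_series (fun n => Rabs (a n * rho ^ n))); [intros; apply Rabs_pos| exact Hs].
  - apply Rinv_0_lt_compat; lra.
  - intros n. pose proof (term_le_series (fun n => Rabs (a n * rho ^ n)) n (fun k => Rabs_pos _) Hs) as Ht. simpl in Ht.
    rewrite Rabs_mult, (Rabs_pos_eq (rho^n)) in Ht by (apply pow_le; lra).
    assert (0 < rho ^ n) by (apply pow_lt; lra).
    replace (Rabs (a n)) with (Rabs (a n) * rho ^ n * (/rho)^n).
    + apply Rmult_le_compat_r; [apply pow_le; apply Rlt_le, Rinv_0_lt_compat; lra| exact Ht].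
    + rewrite Rmult_assoc, <- Rpow_mult_distr, Rinv_r, pow1 by lra. ring.
Qed.

Fixpoint srec (step : nat -> (nat -> R) -> R) (n : nat) : nat -> R :=
  match n with
  | O => fun _ => step O (fun _ => 0)
  | S m => fun k => if Nat.leb k m then srec step m k else step (S m) (srec step m)
  end.
Definition sseq step n := srec step n n.

Lemma srec_le step n k : (k <= n)%nat -> srec step n k = sseq step k.
Proof.
  induction n as [|m IH]; intros Hk.
  - assert (k = O) by lia. subst. reflexivity.
  - simpl. destruct (Nat.leb k m) eqn:E.
    + apply Nat.leb_le in E. apply IH, E.
    + pose proof E as E'. apply Nat.leb_gt in E. assert (k = S m) by lia. subst.
      unfold sseq. cbn [srec]. rewrite E'. reflexivity.
Qed.

Lemma sseq_eq step
  (Hstep : forall n f g, (forall k, (k < n)%nat -> f k = g k) -> step n f = step n g) n :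
  sseq step n = step n (sseq step).
Proof.
  destruct n as [|m].
  - unfold sseq. simpl. apply Hstep. intros; lia.
  - unfold sseq at 1. cbn [srec]. replace (Nat.leb (S m) m) with false by (symmetry; apply Nat.leb_gt; lia). apply Hstep.
    intros k Hk. apply srec_le. lia.
Qed.

Lemma maj s A R C : 0 <= A -> 0 < R -> 0 <= C -> Rabs (s 0%nat) <= C ->
  (forall m, Rabs (s (S m)) <= sum_f_R0 (fun k => A * R ^ (S k) * Rabs (s (m - k)%nat)) m) ->
  forall n, Rabs (s n) <= C * (2*R*(1+A)) ^ n.
Proof.
  intros HA HR HC H0 Hs.
  set (B := 2*R*(1+A)). assert (HB : 0 < B) by (unfold B; nra).
  set (q := R / B).
  assert (Hq : q = /(2*(1+A))) by (unfold q, B; field; lra).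
  assert (Hq0 : 0 < q) by (rewrite Hq; apply Rinv_0_lt_compat; lra).
  assert (Hq1 : q < 1) by (rewrite Hq; rewrite <- Rinv_1; apply Rinv_lt_contravar; lra).
  assert (forall n j, (j <= n)%nat -> Rabs (s j) <= C * B ^ j) as Hall.
  { induction n as [|m IH]; intros j Hj.
    - assert (j = O) by lia. subst. simpl. lra.
    - destruct (Nat.eq_dec j (S m)) as [->|Hne]; [|apply IH; lia].
      eapply Rle_trans; [apply Hs|].
      apply Rle_trans with (sum_f_R0 (fun k => q ^ k * (A * C * B ^ (S m) * q)) m).
      + apply sum_Rle. intros k Hk.
        replace (q ^ k * (A * C * B ^ (S m) * q)) with (A * R ^ (S k) * (C * B ^ (m - k))).
        * apply Rmult_le_compat_l; [apply Rmult_le_pos; [lra| apply pow_le; lra]| apply IH; lia].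
        * replace (S m) with ((m - k) + S k)%nat by lia. rewrite pow_add.
          unfold q. rewrite <- tech_pow_Rmult. unfold Rdiv. rewrite Rpow_mult_distr.
          rewrite pow_inv. simpl. field. repeat split; try apply pow_nonzero; apply Rgt_not_eq; lra.
      + rewrite <- scal_sum. rewrite tech3 by lra.
        assert (0 < q ^ S m) by (apply pow_lt; lra).
        assert (0 <= A * C * B ^ S m) by (apply Rmult_le_pos; [nra| apply pow_le; lra]).
        apply Rle_trans with (A * C * B ^ S m * (q / (1 - q))).
        * assert (0 <= A*C*B^S m*(q/(1-q))) by (apply Rmult_le_pos; [lra| apply Rlt_le; unfold Rdiv; apply Rmult_lt_0_compat; [lra| apply Rinv_0_lt_compat; lra]]).
          match goal with |- ?L <= _ => replace L with (A*C*B^S m * (q/(1-q)) * (1 - q^S m)) by (field; lra) end.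
          nra.
        * assert (A * (q / (1 - q)) <= 1).
          { rewrite Hq. replace (A * (/ (2 * (1 + A)) / (1 - / (2 * (1 + A))))) with (A / (1 + 2*A)) by (field; lra).
            apply Rmult_le_reg_r with (1 + 2 * A); [lra|]. unfold Rdiv. rewrite Rmult_assoc, Rinv_l by lra. lra. }
          assert (0 <= C * B ^ S m) by (apply Rmult_le_pos; [lra| apply pow_le; lra]).
          replace (A * C * B ^ S m * (q / (1 - q))) with (C * B ^ S m * (A * (q / (1 - q)))) by ring.
          nra. }
  intros n. apply (Hall n n). lia.
Qed.

Definition germ (lam : R) (f : R -> R) (x0 : R) : Prop :=
  exists (c : nat -> R) (r : R), 0 < r /\ Rbar_le r (CV_radius c) /\
    forall x, 0 <= x <= lam -> Rabs (x - x0) < r -> f x = PSeries c (x - x0).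

Lemma lt_rad c (r t : R) : Rbar_le r (CV_radius c) -> Rabs t < r -> Rbar_lt (Rabs t) (CV_radius c).
Proof. intros H1 H2. apply Rbar_lt_le_trans with r; [exact H2| exact H1]. Qed.

Lemma germ_ext lam f g x0 : (forall x, 0 <= x <= lam -> f x = g x) -> germ lam f x0 -> germ lam g x0.
Proof.
  intros Hfg (c & r & Hr & Hc & Heq). exists c, r. repeat split; auto.
  intros x Hx Hxr. rewrite <- Hfg by exact Hx. apply Heq; auto.
Qed.

Definition cst (k : R) (n : nat) : R := match n with O => k | S _ => 0 end.

Lemma PSeries_cst k t : Rbar_lt (Rabs t) (CV_radius (cst k)) -> PSeries (cst k) t = k.
Proof.
  intros H. rewrite PSeries_decr_1 by (apply CV_radius_inside, H).
  simpl. rewrite (PSeries_ext _ (fun _ => 0)) by (intros n; reflexivity).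
  rewrite PSeries_const_0. ring.
Qed.

Lemma radius_cst k : Rbar_le (/2) (CV_radius (cst k)).
Proof.
  replace (/2) with (/(2*1)) by field.
  apply (radius_of_bound _ (Rabs k) 1); [lra|].
  intros [|n]; cbn [cst pow]; [lra|]. rewrite Rabs_R0. pose proof (Rabs_pos k). pose proof (pow_le 1 n). nra.
Qed.

Lemma germ_const lam k x0 : germ lam (fun _ => k) x0.
Proof.
  exists (cst k), (/2). repeat split.
  - lra.
  - apply radius_cst.
  - intros x _ Hx. symmetry. apply PSeries_cst. apply (lt_rad _ (/2)); [apply radius_cst| exact Hx].
Qed.

Lemma shrink c c' r : 0 < r -> Rbar_le r (CV_radius c) ->
  (forall x, CV_disk c x -> CV_disk c' x) -> Rbar_le (r/2) (CV_radius c').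
Proof.
  intros Hr Hc H. replace (r/2) with (Rabs (r/2)) by (apply Rabs_pos_eq; lra).
  apply cvdisk_radius. apply H. apply CV_disk_inside. apply (lt_rad _ r); [exact Hc|].
  rewrite Rabs_pos_eq; lra.
Qed.

Lemma germ_scal lam k f x0 : germ lam f x0 -> germ lam (fun x => k * f x) x0.
Proof.
  intros (c & r & Hr & Hc & Heq). exists (PS_scal k c), (r/2). repeat split.
  - lra.
  - apply (shrink c); auto. intros x Hx. apply CV_disk_scal, Hx.
  - intros x Hx Hxr. rewrite PSeries_scal, Heq by (auto; lra). reflexivity.
Qed.

Lemma germ_plus lam f g x0 : germ lam f x0 -> germ lam g x0 -> germ lam (fun x => f x + g x) x0.
Proof.
  intros (a & r1 & Hr1 & Ha & Hf) (b & r2 & Hr2 & Hb & Hg).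
  set (r := Rmin r1 r2). assert (0 < r) by (apply Rmin_glb_lt; auto).
  assert (Rbar_le r (CV_radius a)) by (apply Rbar_le_trans with r1; [simpl; apply Rmin_l| exact Ha]).
  assert (Rbar_le r (CV_radius b)) by (apply Rbar_le_trans with r2; [simpl; apply Rmin_r| exact Hb]).
  exists (PS_plus a b), (r/2). repeat split.
  - lra.
  - replace (r/2) with (Rabs (r/2)) by (apply Rabs_pos_eq; lra).
    apply cvdisk_radius. apply CV_disk_plus; apply CV_disk_inside;
      [apply (lt_rad _ r)| apply (lt_rad _ r)]; auto; rewrite Rabs_pos_eq; lra.
  - intros x Hx Hxr. assert (Rabs (x - x0) < r) by lra.
    rewrite PSeries_plus; [| apply CV_radius_inside, (lt_rad _ r); auto| apply CV_radius_inside, (lt_rad _ r); auto].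
    rewrite Hf, Hg; auto.
    + unfold r in *. pose proof (Rmin_r r1 r2). lra.
    + unfold r in *. pose proof (Rmin_l r1 r2). lra.
Qed.

Lemma radius_abs a : CV_radius (fun n => Rabs (a n)) = CV_radius a.
Proof.
  unfold CV_radius. apply Lub_Rbar_eqset. intros x. unfold CV_disk.
  split; apply ex_series_ext; intros n; rewrite !Rabs_mult, Rabs_Rabsolu; reflexivity.
Qed.

Lemma cvdisk_mult a b y : Rbar_lt (Rabs y) (CV_radius a) -> Rbar_lt (Rabs y) (CV_radius b) ->
  CV_disk (PS_mult a b) y.
Proof.
  intros Ha Hb.
  assert (H : ex_pseries (PS_mult (fun n => Rabs (a n)) (fun n => Rabs (b n))) (Rabs y)).
  { apply ex_pseries_mult; rewrite radius_abs, Rabs_Rabsolu; assumption. }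
  unfold ex_pseries, CV_disk in *.
  refine (@ex_series_le R_AbsRing R_CompleteNormedModule _ _ _ H).
  intros n. change norm with Rabs. simpl. rewrite Rabs_Rabsolu.
  replace (scal (pow_n (Rabs y) n) (PS_mult (fun n0 : nat => Rabs (a n0)) (fun n0 : nat => Rabs (b n0)) n))
   with (Rabs y ^ n * PS_mult (fun n0 : nat => Rabs (a n0)) (fun n0 : nat => Rabs (b n0)) n)
   by (rewrite <- pow_n_pow; reflexivity).
  rewrite Rabs_mult, <- RPow_abs, Rmult_comm. apply Rmult_le_compat_l; [apply pow_le, Rabs_pos|].
  unfold PS_mult. eapply Rle_trans; [apply sum_f_R0_triangle|].
  right. apply sum_eq. intros i _. apply Rabs_mult.
Qed.

Lemma germ_mult lam f g x0 : germ lam f x0 -> germ lam g x0 -> germ lam (fun x => f x * g x) x0.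
Proof.
  intros (a & r1 & Hr1 & Ha & Hf) (b & r2 & Hr2 & Hb & Hg).
  set (r := Rmin r1 r2). assert (0 < r) by (apply Rmin_glb_lt; auto).
  assert (Rbar_le r (CV_radius a)) by (apply Rbar_le_trans with r1; [simpl; apply Rmin_l| exact Ha]).
  assert (Rbar_le r (CV_radius b)) by (apply Rbar_le_trans with r2; [simpl; apply Rmin_r| exact Hb]).
  exists (PS_mult a b), (r/2). repeat split.
  - lra.
  - replace (r/2) with (Rabs (r/2)) by (apply Rabs_pos_eq; lra).
    apply cvdisk_radius. apply cvdisk_mult;
      [apply (lt_rad _ r)| apply (lt_rad _ r)]; auto; rewrite Rabs_pos_eq; lra.
  - intros x Hx Hxr. assert (Rabs (x - x0) < r) by lra.
    rewrite PSeries_mult; [| apply (lt_rad _ r); auto| apply (lt_rad _ r); auto].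
    rewrite Hf, Hg; auto.
    + unfold r in *. pose proof (Rmin_r r1 r2). lra.
    + unfold r in *. pose proof (Rmin_l r1 r2). lra.
Qed.

Definition clamp (lam x : R) := Rmax 0 (Rmin lam x).

Lemma clamp_in lam x : 0 <= lam -> 0 <= clamp lam x <= lam.
Proof. intros H. unfold clamp, Rmax, Rmin. repeat destruct Rle_dec; lra. Qed.

Lemma clamp_id lam x : 0 <= x <= lam -> clamp lam x = x.
Proof. intros H. unfold clamp, Rmax, Rmin. repeat destruct Rle_dec; lra. Qed.

Lemma clamp_lip lam x y : 0 <= lam -> Rabs (clamp lam x - clamp lam y) <= Rabs (x - y).
Proof.
  intros H. unfold clamp, Rmax, Rmin.
  repeat destruct Rle_dec; unfold Rabs; repeat destruct Rcase_abs; lra.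
Qed.

Lemma clamp_cont lam x : 0 <= lam -> continuous (clamp lam) x.
Proof.
  intros Hl. apply continuity_pt_filterlim.
  unfold continuity_pt, continue_in, limit1_in, limit_in.
  intros eps Heps. exists eps. split; [exact Heps|].
  intros y [_ Hy]. simpl in *. unfold R_dist in *.
  eapply Rle_lt_trans; [apply clamp_lip; exact Hl| exact Hy].
Qed.

Lemma germ_cont lam f z : 0 <= lam -> 0 <= z <= lam -> germ lam f z ->
  continuous (fun y => f (clamp lam y)) z.
Proof.
  intros Hl Hz (c & r & Hr & Hc & Heq).
  apply continuous_ext_loc with (fun y => PSeries c (clamp lam y - z)).
  - exists (mkposreal r Hr). intros y Hy.
    change (Rabs (y - z) < r) in Hy.
    symmetry. apply Heq; [apply clamp_in; exact Hl|].
    apply Rle_lt_trans with (Rabs (y - z)); [| exact Hy].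
    rewrite <- (clamp_id lam z Hz) at 1. apply clamp_lip; exact Hl.
  - apply continuous_comp with (f := fun y => clamp lam y - z) (g := PSeries c).
    + apply (continuous_minus (clamp lam) (fun _ => z)); [apply clamp_cont, Hl| apply continuous_const].
    + rewrite clamp_id by exact Hz. rewrite Rminus_diag.
      apply continuity_pt_filterlim. apply PSeries_continuity.
      apply (lt_rad _ r); auto. rewrite Rabs_R0. exact Hr.
Qed.

Lemma germ_exRInt lam f a b : 0 <= lam -> (forall y, 0 <= y <= lam -> germ lam f y) ->
  0 <= a <= lam -> 0 <= b <= lam -> ex_RInt f a b.
Proof.
  intros Hl Hg Ha Hb.
  apply ex_RInt_ext with (fun y => f (clamp lam y)).
  - intros x Hx. rewrite clamp_id; [reflexivity|].
    split; [apply Rle_trans with (Rmin a b); [apply Rmin_glb; lra| lra]|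
            apply Rle_trans with (Rmax a b); [lra| apply Rmax_lub; lra]].
  - apply (@ex_RInt_continuous R_CompleteNormedModule). intros z Hz.
    assert (0 <= z <= lam).
    { split; [apply Rle_trans with (Rmin a b); [apply Rmin_glb; lra| lra]|
            apply Rle_trans with (Rmax a b); [lra| apply Rmax_lub; lra]]. }
    apply germ_cont; auto.
Qed.

Lemma germ_ext_loc lam f g x0 d : 0 < d ->
  (forall x, 0 <= x <= lam -> Rabs (x - x0) < d -> f x = g x) -> germ lam f x0 -> germ lam g x0.
Proof.
  intros Hd Hfg (c & r & Hr & Hc & Heq). exists c, (Rmin r d). repeat split.
  - apply Rmin_glb_lt; auto.
  - apply Rbar_le_trans with r; [simpl; apply Rmin_l| exact Hc].
  - intros x Hx Hxr. pose proof (Rmin_l r d). pose proof (Rmin_r r d).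
    rewrite <- Hfg by (auto; lra). apply Heq; auto; lra.
Qed.

Lemma germ_int lam f x0 : 0 <= lam -> (forall y, 0 <= y <= lam -> germ lam f y) -> 0 <= x0 <= lam ->
  germ lam (fun x => RInt f 0 x) x0.
Proof.
  intros Hl Hg Hx0.
  destruct (Hg x0 Hx0) as (c & r & Hr & Hc & Heq).
  apply germ_ext_loc with (fun x => RInt f 0 x0 + PSeries (PS_Int c) (x - x0)) r; [exact Hr| |].
  - intros x Hx Hxr.
    rewrite <- (RInt_Chasles f 0 x0 x); [| apply (germ_exRInt lam); auto; lra| apply (germ_exRInt lam); auto].
    symmetry. refine (f_equal2 Rplus eq_refl _).
    assert (Hlt : Rbar_lt (Rabs (x - x0)) (CV_radius c)) by (apply (lt_rad _ r); auto).
    rewrite <- RInt_PSeries by exact Hlt.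
    assert (Hex : ex_RInt (PSeries c) (1*x0 + -x0) (1*x + -x0)).
    { replace (1*x0 + -x0) with 0 by ring. replace (1*x + -x0) with (x - x0) by ring.
      apply ex_RInt_PSeries, Hlt. }
    pose proof (@RInt_comp_lin R_CompleteNormedModule (PSeries c) 1 (-x0) x0 x Hex) as E.
    replace (1*x0 + -x0) with 0 in E by ring. replace (1*x + -x0) with (x - x0) in E by ring.
    rewrite <- E. symmetry. apply RInt_ext. intros y Hy.
    change (scal 1 ?v) with (1 * v). rewrite Rmult_1_l. replace (1*y + -x0) with (y - x0) by ring.
    symmetry. apply Heq.
    + split; [apply Rle_trans with (Rmin x0 x); [apply Rmin_glb; lra| lra]|
              apply Rle_trans with (Rmax x0 x); [lra| apply Rmax_lub; lra]].
    + apply Rle_lt_trans with (Rabs (x - x0)); [| exact Hxr].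
      unfold Rmin, Rmax in Hy. destruct Rle_dec; unfold Rabs; repeat destruct Rcase_abs; lra.
  - apply germ_plus; [apply germ_const|].
    exists (PS_Int c), r. repeat split; auto. rewrite CV_radius_Int. exact Hc.
Qed.

Lemma germ_of_analytic lam h x0 : 0 < lam -> analytic_on 0 lam h -> 0 <= x0 <= lam -> germ lam h x0.
Proof.
  intros Hl Ha Hx0. destruct (Ha x0 Hx0) as (c & r & Hr & Hc).
  set (s := Rmin (r/2) (lam/2)).
  assert (Hs : 0 < s) by (apply Rmin_glb_lt; lra).
  assert (Hs1 : s <= r/2) by apply Rmin_l. assert (Hs2 : s <= lam/2) by apply Rmin_r.
  assert (exists x1, 0 <= x1 <= lam /\ Rabs (x1 - x0) = s) as [x1 [Hx1 Hd]].
  { destruct (Rle_dec x0 (lam/2)).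
    - exists (x0 + s). split; [lra|]. replace (x0 + s - x0) with s by ring. apply Rabs_pos_eq; lra.
    - exists (x0 - s). split; [lra|]. replace (x0 - s - x0) with (-s) by ring. rewrite Rabs_Ropp. apply Rabs_pos_eq; lra. }
  assert (Hrad : Rbar_le s (CV_radius c)).
  { apply Rbar_not_lt_le. intros Hlt. rewrite <- Hd in Hlt.
    apply (CV_disk_outside _ _ Hlt).
    pose proof (Hc x1 Hx1 ltac:(lra)) as Hp.
    apply (ex_series_lim_0 (fun n => c n * (x1 - x0) ^ n)).
    exists (h x1). unfold is_pseries in Hp.
    eapply is_series_ext; [| exact Hp]. intros n. simpl. rewrite pow_n_pow.
    change scal with Rmult. simpl. apply Rmult_comm. }
  exists c, s. repeat split; auto.
  intros x Hx Hxs. symmetry. apply is_pseries_unique. apply Hc; auto; lra.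
Qed.

Lemma analytic_of_germ lam f : (forall x0, 0 <= x0 <= lam -> germ lam f x0) -> analytic_on 0 lam f.
Proof.
  intros Hg x0 Hx0. destruct (Hg x0 Hx0) as (c & r & Hr & Hc & Heq).
  exists c, r. split; auto. intros x Hx Hxr. rewrite Heq by auto.
  apply PSeries_correct, CV_radius_inside, (lt_rad _ r); auto.
Qed.

Definition rstep (p : nat -> R) (n : nat) (g : nat -> R) : R :=
  match n with
  | O => / p O
  | S m => - / p O * sum_f_R0 (fun k => p (S k) * g (m - k)%nat) m
  end.

Lemma rstep_ext p n f g : (forall k, (k < n)%nat -> f k = g k) -> rstep p n f = rstep p n g.
Proof.
  intros H. destruct n as [|m]; simpl; [reflexivity|].
  f_equal. apply sum_eq. intros i Hi. rewrite H by lia. reflexivity.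
Qed.

Lemma germ_recip lam f x0 : 0 <= x0 <= lam -> germ lam f x0 -> f x0 <> 0 -> germ lam (fun x => / f x) x0.
Proof.
  intros Hx0 (p & r & Hr & Hp & Heq) Hnz.
  assert (Hp0 : p O = f x0) by (rewrite Heq by (auto; rewrite Rminus_diag, Rabs_R0; exact Hr);
                                rewrite Rminus_diag, PSeries_0; reflexivity).
  rewrite <- Hp0 in Hnz.
  destruct (coef_bound p) as (A & R0 & HA & HR0 & Hb).
  { apply Rbar_lt_le_trans with r; [exact Hr| exact Hp]. }
  set (w := sseq (rstep p)).
  assert (Hw : forall n, w n = rstep p n w) by (intros n; apply sseq_eq; intros; apply rstep_ext; auto).
  assert (Hpa : 0 < Rabs (p O)) by (apply Rabs_pos_lt; exact Hnz).
  assert (Hmaj := maj w (A / Rabs (p O)) R0 (Rabs (w O))).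
  assert (Hbound : forall n, Rabs (w n) <= Rabs (w O) * (2 * R0 * (1 + A / Rabs (p O))) ^ n).
  { apply Hmaj.
    - apply Rmult_le_pos; [lra| apply Rlt_le, Rinv_0_lt_compat; lra].
    - exact HR0.
    - apply Rabs_pos.
    - lra.
    - intros m. rewrite Hw. simpl. rewrite Rabs_mult, Rabs_Ropp, Rabs_inv.
      eapply Rle_trans.
      { apply Rmult_le_compat_l; [apply Rlt_le, Rinv_0_lt_compat; lra| apply sum_f_R0_triangle]. }
      rewrite scal_sum. apply sum_Rle. intros k Hk.
      rewrite Rabs_mult. specialize (Hb (S k)).
      assert (0 <= Rabs (w (m - k)%nat)) by apply Rabs_pos.
      assert (0 < / Rabs (p O)) by (apply Rinv_0_lt_compat; lra).
      unfold Rdiv.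
      match goal with |- _ <= ?Rhs => replace Rhs with (A * R0 ^ S k * Rabs (w (m - k)%nat) * / Rabs (p O)) by (simpl; ring) end.
      apply Rmult_le_compat_r; [lra|]. apply Rmult_le_compat_r; [lra| exact Hb]. }
  set (B := 2 * R0 * (1 + A / Rabs (p O))).
  assert (HB : 0 < B).
  { unfold B. assert (0 <= A / Rabs (p O)) by (apply Rmult_le_pos; [lra| apply Rlt_le, Rinv_0_lt_compat; lra]). nra. }
  assert (Hrw : Rbar_le (/(2*B)) (CV_radius w)) by (apply (radius_of_bound _ (Rabs (w O)) B HB Hbound)).
  assert (Hmul : forall n, PS_mult p w n = cst 1 n).
  { intros [|m].
    - unfold PS_mult. simpl. rewrite Hw. simpl. field. exact Hnz.
    - unfold PS_mult. rewrite decomp_sum by lia. simpl pred.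
      rewrite (sum_eq _ (fun k => p (S k) * w (m - k)%nat)) by (intros i Hi; reflexivity).
      replace (S m - 0)%nat with (S m) by lia. rewrite (Hw (S m)). simpl. field. exact Hnz. }
  set (r' := Rmin r (Rmin (/(2*B)) (/2))).
  assert (Hr'1 : r' <= r) by apply Rmin_l.
  assert (Hr'2 : r' <= /(2*B)) by (eapply Rle_trans; [apply Rmin_r| apply Rmin_l]).
  assert (Hr'3 : r' <= /2) by (eapply Rle_trans; [apply Rmin_r| apply Rmin_r]).
  assert (Hr' : 0 < r').
  { apply Rmin_glb_lt; [exact Hr| apply Rmin_glb_lt; [apply Rinv_0_lt_compat; lra| lra]]. }
  exists w, r'. repeat split.
  - exact Hr'.
  - apply Rbar_le_trans with (/(2*B)); [exact Hr'2| exact Hrw].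
  - intros x Hx Hxr. rewrite Heq by (auto; lra).
    assert (E : PSeries p (x - x0) * PSeries w (x - x0) = 1).
    { rewrite <- PSeries_mult.
      - rewrite (PSeries_ext _ (cst 1)) by exact Hmul. apply PSeries_cst.
        apply (lt_rad _ (/2)); [apply radius_cst| lra].
      - apply (lt_rad _ r); auto; lra.
      - apply (lt_rad _ (/(2*B))); auto; lra. }
    assert (PSeries p (x - x0) <> 0) by (intros Hz; rewrite Hz in E; lra).
    rewrite <- (Rmult_1_l (/ PSeries p (x - x0))), <- E. field. auto.
Qed.

Definition estep (a b : nat -> R) (n : nat) (g : nat -> R) : R :=
  match n with
  | O => exp (a O)
  | S m => sum_f_R0 (fun k => b k * g (m - k)%nat) m / INR (S m)
  end.

Lemma estep_ext a b n f g : (forall k, (k < n)%nat -> f k = g k) -> estep a b n f = estep a b n g.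
Proof.
  intros H. destruct n as [|m]; simpl; [reflexivity|].
  f_equal. apply sum_eq. intros i Hi. rewrite H by lia. reflexivity.
Qed.

Lemma germ_exp lam f x0 : germ lam f x0 -> germ lam (fun x => exp (f x)) x0.
Proof.
  intros (a & r & Hr & Ha & Heq).
  set (b := PS_derive a).
  assert (Hrb : Rbar_le r (CV_radius b)) by (unfold b; rewrite CV_radius_derive; exact Ha).
  destruct (coef_bound b) as (A & R0 & HA & HR0 & Hb).
  { apply Rbar_lt_le_trans with r; [exact Hr| exact Hrb]. }
  set (s := sseq (estep a b)).
  assert (Hs : forall n, s n = estep a b n s) by (intros n; apply sseq_eq; intros; apply estep_ext; auto).
  assert (Hbound : forall n, Rabs (s n) <= Rabs (s O) * (2 * R0 * (1 + A / R0)) ^ n).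
  { apply maj.
    - apply Rmult_le_pos; [lra| apply Rlt_le, Rinv_0_lt_compat; lra].
    - exact HR0.
    - apply Rabs_pos.
    - lra.
    - intros m. rewrite Hs. cbn [estep]. unfold Rdiv. rewrite Rabs_mult.
      assert (HI : 1 <= INR (S m)) by (rewrite S_INR; pose proof (pos_INR m); lra).
      rewrite Rabs_inv, (Rabs_pos_eq (INR (S m))) by lra.
      apply Rle_trans with (Rabs (sum_f_R0 (fun k => b k * s (m - k)%nat) m)).
      { pose proof (Rabs_pos (sum_f_R0 (fun k => b k * s (m - k)%nat) m)).
        assert (0 < / INR (S m) <= 1).
        { split; [apply Rinv_0_lt_compat; lra|]. rewrite <- Rinv_1. apply Rinv_le_contravar; lra. }
        nra. }
      eapply Rle_trans; [apply sum_f_R0_triangle|].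
      apply sum_Rle. intros k Hk. rewrite Rabs_mult.
      specialize (Hb k).
      match goal with |- _ <= ?Rhs => replace Rhs with (A * R0 ^ k * Rabs (s (m - k)%nat)) by (simpl; field; lra) end.
      apply Rmult_le_compat_r; [apply Rabs_pos| exact Hb]. }
  set (B := 2 * R0 * (1 + A / R0)).
  assert (HB : 0 < B).
  { unfold B. assert (0 <= A / R0) by (apply Rmult_le_pos; [lra| apply Rlt_le, Rinv_0_lt_compat; lra]). nra. }
  assert (Hrs : Rbar_le (/(2*B)) (CV_radius s)) by (apply (radius_of_bound _ (Rabs (s O)) B HB Hbound)).
  assert (Hder : forall n, PS_derive s n = PS_mult b s n).
  { intros n. unfold PS_derive, PS_mult. rewrite (Hs (S n)). cbn [estep].
    field. apply not_0_INR. lia. }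
  set (r' := Rmin r (/(2*B))).
  assert (Hr'1 : r' <= r) by apply Rmin_l.
  assert (Hr'2 : r' <= /(2*B)) by apply Rmin_r.
  assert (Hr' : 0 < r') by (apply Rmin_glb_lt; [exact Hr| apply Rinv_0_lt_compat; lra]).
  assert (Key : forall t, Rabs t < r' -> PSeries s t = exp (PSeries a t)).
  { intros t Ht.
    set (F := fun y => PSeries s y * exp (- PSeries a y)).
    assert (HdF : forall y, Rabs y < r' -> is_derive F y 0).
    { intros y Hy.
      assert (H1 : Rbar_lt (Rabs y) (CV_radius s)) by (apply (lt_rad _ (/(2*B))); auto; lra).
      assert (H2 : Rbar_lt (Rabs y) (CV_radius a)) by (apply (lt_rad _ r); auto; lra).
      assert (H3 : Rbar_lt (Rabs y) (CV_radius b)) by (apply (lt_rad _ r); auto; lra).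
      pose proof (is_derive_PSeries s y H1) as Ds.
      pose proof (is_derive_PSeries a y H2) as Da.
      pose proof (@is_derive_opp R_AbsRing R_NormedModule _ _ _ Da) as Dna.
      pose proof (is_derive_comp exp (fun y => - PSeries a y) y _ _ (is_derive_exp _) Dna) as De.
      pose proof (is_derive_mult _ _ _ _ _ Ds De (fun n m => Rmult_comm n m)) as Dm.
      unfold F. eapply is_derive_ext; [intros; reflexivity|].
      replace 0 with (plus (mult (PSeries (PS_derive s) y) (exp (- PSeries a y)))
                        (mult (PSeries s y) (scal (opp (PSeries (PS_derive a) y)) (exp (- PSeries a y))))).
      - exact Dm.
      - rewrite (PSeries_ext (PS_derive s) (PS_mult b s) y Hder), PSeries_mult by auto.
        change (PS_derive a) with b.
        unfold plus, mult, scal, opp. simpl. change (mult ?x ?z) with (x * z). ring. }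
    assert (HI := is_RInt_derive F (fun _ => 0) 0 t).
    assert (Hint : is_RInt (fun _ => 0) 0 t (minus (F t) (F 0))).
    { apply HI.
      - intros y Hy. apply HdF. apply Rle_lt_trans with (Rabs t); [| exact Ht].
        unfold Rmin, Rmax in Hy. destruct Rle_dec; unfold Rabs; repeat destruct Rcase_abs; lra.
      - intros; apply continuous_const. }
    pose proof (@is_RInt_const R_NormedModule 0 t 0) as H0'.
    pose proof (is_RInt_unique _ _ _ _ Hint) as U1. rewrite (is_RInt_unique _ _ _ _ H0') in U1.
    assert (HF0 : F 0 = 1).
    { unfold F. rewrite !PSeries_0. rewrite (Hs O). cbn [estep]. rewrite exp_Ropp. field. apply Rgt_not_eq, exp_pos. }
    assert (HFt : F t = 1).
    { unfold minus, plus, opp, scal, mult in U1. simpl in U1. change (mult ?x ?z) with (x * z) in U1. nra. }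
    unfold F in HFt. rewrite exp_Ropp in HFt.
    pose proof (exp_pos (PSeries a t)).
    apply Rmult_eq_reg_r with (/ exp (PSeries a t)); [| apply Rgt_not_eq, Rinv_0_lt_compat; lra].
    rewrite HFt. field. lra. }
  exists s, r'. repeat split.
  - exact Hr'.
  - apply Rbar_le_trans with (/(2*B)); [exact Hr'2| exact Hrs].
  - intros x Hx Hxr. rewrite Heq by (auto; lra). symmetry. apply Key, Hxr.
Qed.

Lemma germ_id lam y : 0 <= lam -> 0 <= y <= lam -> germ lam (fun x => x) y.
Proof.
  intros Hl Hy.
  apply germ_ext with (fun x => RInt (fun _ => 1) 0 x).
  - intros x _. rewrite RInt_const. change (scal (x - 0) 1) with ((x - 0) * 1). ring.
  - apply germ_int; auto. intros; apply germ_const.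
Qed.

Lemma Psi_ge1 lam beta h x : 0 <= beta -> inK lam h -> 0 <= x <= lam -> 1 <= Psi beta h x.
Proof.
  intros Hb [_ HK] Hx. unfold Psi. destruct (HK x Hx). nra.
Qed.

Lemma Psi_le lam beta h x : 0 <= beta -> inK lam h -> 0 <= x <= lam -> Psi beta h x <= 1 + beta.
Proof.
  intros Hb [_ HK] Hx. unfold Psi. destruct (HK x Hx) as [H1 H2].
  rewrite Rabs_pos_eq in H2 by lra. nra.
Qed.

Section Germs.
Variables (lam beta : R) (h : R -> R).
Hypotheses (Hl : 0 < lam) (Hb : 0 <= beta) (Hh : inK lam h).

Lemma gPsi y : 0 <= y <= lam -> germ lam (Psi beta h) y.
Proof.
  intros Hy. apply germ_ext with (fun x => 1 + beta * h x); [intros; reflexivity|].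
  apply germ_plus; [apply germ_const| apply germ_scal].
  apply germ_of_analytic; auto. apply Hh.
Qed.

Lemma gW y : 0 <= y <= lam -> germ lam (fun x => / Psi beta h x) y.
Proof.
  intros Hy. apply germ_recip; auto; [apply gPsi; auto|].
  pose proof (Psi_ge1 lam beta h y Hb Hh Hy). lra.
Qed.

Lemma gXW y : 0 <= y <= lam -> germ lam (fun xi => xi / Psi beta h xi) y.
Proof.
  intros Hy. apply germ_mult; [apply germ_id; auto; lra| apply gW; auto].
Qed.

Lemma gG y : 0 <= y <= lam -> germ lam (G beta h) y.
Proof.
  intros Hy. unfold G.
  apply germ_mult; [| apply gW; auto].
  apply germ_exp. apply germ_scal. apply germ_int; [lra| |auto].
  apply gXW.
Qed.

Lemma exG a b : 0 <= a <= lam -> 0 <= b <= lam -> ex_RInt (G beta h) a b.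
Proof. intros; apply (germ_exRInt lam); auto; [lra| apply gG]. Qed.

Lemma exXW a b : 0 <= a <= lam -> 0 <= b <= lam -> ex_RInt (fun xi => xi / Psi beta h xi) a b.
Proof. intros; apply (germ_exRInt lam); auto; [lra| apply gXW]. Qed.

Lemma G_pos x : 0 <= x <= lam -> 0 < G beta h x.
Proof.
  intros Hx. unfold G. pose proof (Psi_ge1 lam beta h x Hb Hh Hx).
  apply Rmult_lt_0_compat; [apply exp_pos| apply Rinv_0_lt_compat; lra].
Qed.

Lemma intG_ge0 a b : 0 <= a <= b -> b <= lam -> 0 <= RInt (G beta h) a b.
Proof.
  intros Ha Hb'. apply RInt_ge_0; [lra| apply exG; lra|].
  intros x Hx. apply Rlt_le, G_pos. lra.
Qed.

End Germs.

Lemma tau_as lam gamma beta h x : 0 < gamma -> 0 <= x <= lam -> 0 < lam -> 0 <= beta -> inK lam h ->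
  tau gamma lam beta h x = (1 + gamma * RInt (G beta h) 0 x) /
     (1 + gamma * (RInt (G beta h) 0 x + RInt (G beta h) x lam)).
Proof.
  intros Hg Hx Hl Hb Hh. unfold tau, Defs.D.
  rewrite <- (RInt_Chasles (G beta h) 0 x lam) by (apply (exG lam); auto; lra).
  change plus with Rplus.
  pose proof (intG_ge0 lam beta h Hl Hb Hh 0 x ltac:(lra) ltac:(lra)).
  pose proof (intG_ge0 lam beta h Hl Hb Hh x lam ltac:(lra) ltac:(lra)).
  field. repeat split; apply Rgt_not_eq; nra.
Qed.

Lemma tau_inK lam gamma beta h : 0 < lam -> 0 < gamma -> 0 <= beta -> inK lam h ->
  inK lam (tau gamma lam beta h).
Proof.
  intros Hl Hg Hb Hh. split; [split|].
  - apply analytic_of_germ. intros x0 Hx0. unfold tau.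
    apply germ_scal. apply germ_plus; [apply germ_const|].
    apply germ_int; [lra| |auto]. apply gG; auto.
  - exists 1. intros x Hx. rewrite tau_as by auto.
    pose proof (intG_ge0 lam beta h Hl Hb Hh 0 x ltac:(lra) ltac:(lra)).
    pose proof (intG_ge0 lam beta h Hl Hb Hh x lam ltac:(lra) ltac:(lra)).
    rewrite Rabs_pos_eq.
    + apply Rmult_le_reg_r with (1 + gamma * (RInt (G beta h) 0 x + RInt (G beta h) x lam)); [nra|].
      unfold Rdiv. rewrite Rmult_assoc, Rinv_l by nra. nra.
    + apply Rmult_le_pos; [nra| apply Rlt_le, Rinv_0_lt_compat; nra].
  - intros x Hx. rewrite tau_as by auto.
    pose proof (intG_ge0 lam beta h Hl Hb Hh 0 x ltac:(lra) ltac:(lra)).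
    pose proof (intG_ge0 lam beta h Hl Hb Hh x lam ltac:(lra) ltac:(lra)).
    assert (0 <= (1 + gamma * RInt (G beta h) 0 x) / (1 + gamma * (RInt (G beta h) 0 x + RInt (G beta h) x lam))).
    { apply Rmult_le_pos; [nra| apply Rlt_le, Rinv_0_lt_compat; nra]. }
    split; [exact H1|]. rewrite Rabs_pos_eq by exact H1.
    apply Rmult_le_reg_r with (1 + gamma * (RInt (G beta h) 0 x + RInt (G beta h) x lam)); [nra|].
    unfold Rdiv. rewrite Rmult_assoc, Rinv_l by nra. nra.
Qed.

Ltac toR := match goal with |- ?l = ?r => change (@eq R l r) end.

Lemma expmono x y : x <= y -> exp x <= exp y.
Proof. intros [H|H]; [apply Rlt_le, exp_increasing, H| subst; lra]. Qed.

Lemma exp_diff1 p q m : q <= p -> p <= m -> 0 <= exp p - exp q <= exp m * (p - q).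
Proof.
  intros Hqp Hpm. split; [pose proof (expmono q p Hqp); lra|].
  replace (exp q) with (exp p * exp (q - p)) by (rewrite <- exp_plus; f_equal; ring).
  pose proof (exp_ineq1_le (q - p)). pose proof (exp_pos p). pose proof (expmono p m Hpm).
  nra.
Qed.

Lemma exp_diff p q m : p <= m -> q <= m -> Rabs (exp p - exp q) <= exp m * Rabs (p - q).
Proof.
  intros Hp Hq. destruct (Rle_dec q p) as [H|H].
  - destruct (exp_diff1 p q m H Hp). rewrite !Rabs_pos_eq by lra. lra.
  - destruct (exp_diff1 q p m ltac:(lra) Hq).
    rewrite Rabs_minus_sym, (Rabs_minus_sym p q), !Rabs_pos_eq by lra. lra.
Qed.

Lemma is_RInt_lin c a b : is_RInt (fun t => c * t) a b (c*b*b/2 - c*a*a/2).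
Proof.
  replace (c*b*b/2 - c*a*a/2) with (minus ((fun t => c*t*t/2) b) ((fun t => c*t*t/2) a)) by
    (unfold minus, plus, opp; simpl; ring).
  apply (@is_RInt_derive R_CompleteNormedModule (fun t => c*t*t/2)).
  - intros x _. auto_derive; [trivial| field].
  - intros x _. apply (@ex_derive_continuous R_AbsRing R_NormedModule). auto_derive. trivial.
Qed.

Lemma RInt_lin c x : RInt (fun t => c * t) 0 x = c * x * x / 2.
Proof.
  replace (c * x * x / 2) with (c*x*x/2 - c*0*0/2) by field.
  apply is_RInt_unique, is_RInt_lin.
Qed.

Lemma rint_abs_le f g a b : a <= b -> ex_RInt f a b -> ex_RInt g a b ->
  (forall x, a < x < b -> Rabs (f x) <= g x) -> Rabs (RInt f a b) <= RInt g a b.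
Proof.
  intros Hab Hf Hg H. apply Rabs_le. split.
  - replace (- RInt g a b) with (RInt (fun x => - g x) a b).
    + apply RInt_le; auto.
      * apply (@ex_RInt_opp R_NormedModule), Hg.
      * intros x Hx. specialize (H x Hx). apply Rabs_le_between in H. lra.
    + apply (@RInt_opp R_CompleteNormedModule). exact Hg.
  - apply RInt_le; auto. intros x Hx. specialize (H x Hx). apply Rabs_le_between in H. lra.
Qed.

Section Contr.
Variables (lam beta : R) (h1 h2 : R -> R) (M : R).
Hypotheses (Hl : 0 < lam) (Hb : 0 <= beta) (Hh1 : inK lam h1) (Hh2 : inK lam h2)
  (HM : forall x, 0 <= x <= lam -> Rabs (h1 x - h2 x) <= M).

Local Notation a := (1 + beta).

Lemma W_diff t : 0 <= t <= lam -> Rabs (/ Psi beta h1 t - / Psi beta h2 t) <= beta * M.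
Proof.
  intros Ht.
  pose proof (Psi_ge1 lam beta h1 t Hb Hh1 Ht). pose proof (Psi_ge1 lam beta h2 t Hb Hh2 Ht).
  replace (/ Psi beta h1 t - / Psi beta h2 t) with ((Psi beta h2 t - Psi beta h1 t) * / (Psi beta h1 t * Psi beta h2 t)) by (field; lra).
  rewrite Rabs_mult, (Rabs_pos_eq (/ _)) by (apply Rlt_le, Rinv_0_lt_compat; nra).
  assert (Hi : / (Psi beta h1 t * Psi beta h2 t) <= 1).
  { rewrite <- Rinv_1. apply Rinv_le_contravar; nra. }
  assert (Hd : Rabs (Psi beta h2 t - Psi beta h1 t) <= beta * M).
  { unfold Psi. replace (1 + beta * h2 t - (1 + beta * h1 t)) with (beta * (h2 t - h1 t)) by ring.
    rewrite Rabs_mult, Rabs_pos_eq by lra. rewrite Rabs_minus_sym. apply Rmult_le_compat_l; auto. }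
  pose proof (Rabs_pos (Psi beta h2 t - Psi beta h1 t)).
  assert (0 <= / (Psi beta h1 t * Psi beta h2 t)) by (apply Rlt_le, Rinv_0_lt_compat; nra).
  nra.
Qed.

Definition U (h : R -> R) (x : R) := RInt (fun xi => xi / Psi beta h xi) 0 x.

Lemma U_lower h x : inK lam h -> 0 <= x <= lam -> x * x / (2 * a) <= U h x.
Proof.
  intros Hh Hx. unfold U.
  replace (x * x / (2 * a)) with (RInt (fun t => / a * t) 0 x).
  - apply RInt_le; [lra| eexists; apply is_RInt_lin| apply (exXW lam); auto; lra|].
    intros t Ht. pose proof (Psi_ge1 lam beta h t Hb Hh ltac:(lra)). pose proof (Psi_le lam beta h t Hb Hh ltac:(lra)).
    unfold Rdiv. rewrite Rmult_comm. apply Rmult_le_compat_l; [lra|].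
    apply Rinv_le_contravar; [lra| lra].
  - rewrite RInt_lin. toR. field. apply Rgt_not_eq; lra.
Qed.

Lemma U_diff x : 0 <= x <= lam -> Rabs (U h1 x - U h2 x) <= beta * M * (x * x) / 2.
Proof.
  intros Hx. unfold U.
  assert (E : RInt (fun xi => xi / Psi beta h1 xi - xi / Psi beta h2 xi) 0 x =
              RInt (fun xi => xi / Psi beta h1 xi) 0 x - RInt (fun xi => xi / Psi beta h2 xi) 0 x).
  { apply (@RInt_minus R_CompleteNormedModule); apply (exXW lam); auto; lra. }
  rewrite <- E.
  replace (beta * M * (x * x) / 2) with (RInt (fun t => beta * M * t) 0 x)
    by (rewrite RInt_lin; toR; field).
  apply rint_abs_le; [lra| | eexists; apply is_RInt_lin|].
  - apply (@ex_RInt_minus R_NormedModule); apply (exXW lam); auto; lra.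
  - intros t Ht. unfold Rdiv. rewrite <- Rmult_minus_distr_l, Rabs_mult, Rabs_pos_eq by lra.
    pose proof (W_diff t ltac:(lra)). nra.
Qed.

Definition phi (x : R) := exp (-(x*x)/a) * (1 + x*x).

Lemma G_diff x : 0 <= x <= lam -> Rabs (G beta h1 x - G beta h2 x) <= beta * M * phi x.
Proof.
  intros Hx. unfold G, phi. fold (U h1 x). fold (U h2 x).
  assert (Ha : 0 < a) by lra.
  pose proof (U_lower h1 x Hh1 Hx). pose proof (U_lower h2 x Hh2 Hx).
  assert (E1 : -(x*x)/a = -2 * (x*x/(2*a))) by (field; apply Rgt_not_eq; lra).
  assert (He : Rabs (exp (-2 * U h1 x) - exp (-2 * U h2 x)) <= exp (-(x*x)/a) * (beta * M * (x * x))).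
  { eapply Rle_trans; [apply exp_diff with (m := -(x*x)/a)|].
    - rewrite E1. lra.
    - rewrite E1. lra.
    - apply Rmult_le_compat_l; [apply Rlt_le, exp_pos|].
      replace (-2 * U h1 x - -2 * U h2 x) with (-2 * (U h1 x - U h2 x)) by ring.
      rewrite Rabs_mult. rewrite Rabs_left by lra. pose proof (U_diff x Hx). lra. }
  assert (E2 : exp (-2 * U h2 x) <= exp (-(x*x)/a)).
  { apply expmono. rewrite E1. lra. }
  pose proof (W_diff x Hx).
  pose proof (Psi_ge1 lam beta h1 x Hb Hh1 Hx).
  assert (0 < / Psi beta h1 x <= 1).
  { split; [apply Rinv_0_lt_compat; lra| rewrite <- Rinv_1; apply Rinv_le_contravar; lra]. }
  unfold Rdiv.
  replace (exp (-2 * U h1 x) * / Psi beta h1 x - exp (-2 * U h2 x) * / Psi beta h2 x) with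
    ((exp (-2 * U h1 x) - exp (-2 * U h2 x)) * / Psi beta h1 x + exp (-2 * U h2 x) * (/ Psi beta h1 x - / Psi beta h2 x)) by ring.
  eapply Rle_trans; [apply Rabs_triang|]. rewrite !Rabs_mult.
  rewrite (Rabs_pos_eq (/ Psi beta h1 x)) by lra.
  rewrite (Rabs_pos_eq (exp (-2 * U h2 x))) by (apply Rlt_le, exp_pos).
  pose proof (exp_pos (-(x*x)/a)). pose proof (exp_pos (-2 * U h2 x)).
  pose proof (Rabs_pos (exp (-2 * U h1 x) - exp (-2 * U h2 x))).
  pose proof (Rabs_pos (/ Psi beta h1 x - / Psi beta h2 x)).
  assert (HM0 : 0 <= M) by (pose proof (HM x Hx); pose proof (Rabs_pos (h1 x - h2 x)); lra).
  unfold Rdiv in *.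
  assert (T1 : Rabs (exp (-2 * U h1 x) - exp (-2 * U h2 x)) * / Psi beta h1 x <= exp (- (x * x) * / a) * (beta * M * (x * x))) by nra.
  assert (T2 : exp (-2 * U h2 x) * Rabs (/ Psi beta h1 x - / Psi beta h2 x) <= exp (- (x * x) * / a) * (beta * M)).
  { apply Rmult_le_compat; auto; lra. }
  nra.
Qed.

End Contr.


Definition phia (a x : R) := exp (-(x*x)/a) * (1 + x*x).

Lemma phi_cont a x : 0 < a -> continuous (phia a) x.
Proof.
  intros Ha. apply (@ex_derive_continuous R_AbsRing R_NormedModule). unfold phia. auto_derive. trivial.
Qed.

Lemma ex_phi a u v : 0 < a -> ex_RInt (phia a) u v.
Proof. intros Ha. apply (@ex_RInt_continuous R_CompleteNormedModule). intros; apply phi_cont, Ha. Qed.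

Lemma phi_int a lam : 0 < a -> 0 <= lam -> RInt (phia a) 0 lam <= (1 + a/2) * (sqrt a / 2) * 3.
Proof.
  intros Ha Hl. set (s := sqrt a).
  assert (Hs : 0 < s) by (apply sqrt_lt_R0, Ha).
  assert (Hss : s * s = a) by (apply sqrt_sqrt; lra).
  set (Phi := fun x => -(1 + a/2) * (s/2) * exp (1 - 2*x/s) - (a*x/2) * exp (-(x*x)/a)).
  set (dPhi := fun x => (1 + a/2) * exp (1 - 2*x/s) - (a/2) * exp (-(x*x)/a) + x*x*exp (-(x*x)/a)).
  assert (HD : forall x, is_derive Phi x (dPhi x)).
  { intros x. unfold Phi, dPhi. auto_derive; [trivial|].
    replace (1 + - (2 * x * / s)) with (1 - 2*x/s) by (unfold Rdiv; ring).
    replace (- (x * x) * / a) with (-(x*x)/a) by (unfold Rdiv; ring).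
    field. split; apply Rgt_not_eq; lra. }
  assert (HI : is_RInt dPhi 0 lam (minus (Phi lam) (Phi 0))).
  { apply (@is_RInt_derive R_CompleteNormedModule Phi).
    - intros; apply HD.
    - intros x _. apply (@ex_derive_continuous R_AbsRing R_NormedModule). unfold dPhi. auto_derive.
      trivial. }
  apply Rle_trans with (RInt dPhi 0 lam).
  - apply RInt_le; [exact Hl| apply ex_phi, Ha| eexists; exact HI|].
    intros x _. unfold phia, dPhi.
    assert (exp (-(x*x)/a) <= exp (1 - 2*x/s)).
    { apply expmono. assert (E : 1 - 2*x/s - (-(x*x)/a) = (x - s) * (x - s) / a) by (rewrite <- Hss; field; repeat split; apply Rgt_not_eq; nra).
      assert (0 <= (x - s) * (x - s) / a) by (apply Rmult_le_pos; [apply (Rle_0_sqr (x - s))| apply Rlt_le, Rinv_0_lt_compat; lra]).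
      apply Rge_le, Rminus_ge, Rle_ge. rewrite E. assumption. }
    nra.
  - rewrite (is_RInt_unique _ _ _ _ HI). unfold minus, plus, opp. simpl. unfold Phi.
    replace (1 - 2*0/s) with 1 by (field; apply Rgt_not_eq; lra).
    pose proof exp_le_3. pose proof (exp_pos (1 - 2 * lam / s)). pose proof (exp_pos (-(lam*lam)/a)).
    assert (0 <= a * lam / 2) by (apply Rmult_le_pos; [apply Rmult_le_pos; lra| lra]).
    assert (0 <= (1 + a/2) * (s/2)) by (apply Rmult_le_pos; lra).
    nra.
Qed.

Lemma alg_bound g A1 A2 R1 R2 P Q : 0 < g -> 0 <= A1 -> 0 <= A2 -> 0 <= R1 -> 0 <= R2 ->
  Rabs (A1 - A2) <= P -> Rabs (R1 - R2) <= Q ->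
  Rabs ((1 + g*A1)/(1 + g*(A1+R1)) - (1 + g*A2)/(1 + g*(A2+R2))) <= g * (P + Q).
Proof.
  intros Hg H1 H2 H3 H4 HP HQ.
  set (D1 := 1 + g*(A1+R1)). set (D2 := 1 + g*(A2+R2)).
  assert (HD1 : 1 <= D1) by (unfold D1; nra). assert (HD2 : 1 <= D2) by (unfold D2; nra).
  assert (Eq : (1 + g*A1)/D1 - (1 + g*A2)/D2 = (g * ((A1-A2)*(g*R2) - (R1-R2)*(1+g*A2))) * / (D1*D2)).
  { unfold D1, D2. field. split; apply Rgt_not_eq; nra. }
  rewrite Eq, Rabs_mult, (Rabs_pos_eq (/ (D1*D2))) by (apply Rlt_le, Rinv_0_lt_compat; nra).
  assert (HN : Rabs (g * ((A1-A2)*(g*R2) - (R1-R2)*(1+g*A2))) <= g * ((P + Q) * D2)).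
  { rewrite Rabs_mult, (Rabs_pos_eq g) by lra. apply Rmult_le_compat_l; [lra|].
    unfold Rminus at 3. eapply Rle_trans; [apply Rabs_triang|]. rewrite Rabs_Ropp, !Rabs_mult.
    change (R1 + - R2) with (R1 - R2).
    rewrite (Rabs_pos_eq g), (Rabs_pos_eq R2), (Rabs_pos_eq (1 + g*A2)) by nra.
    pose proof (Rabs_pos (A1 - A2)). pose proof (Rabs_pos (R1 - R2)).
    assert (g*R2 <= D2) by (unfold D2; nra). assert (1 + g*A2 <= D2) by (unfold D2; nra).
    assert (Rabs (A1 - A2) * (g * R2) <= P * D2) by (apply Rmult_le_compat; nra).
    assert (Rabs (R1 - R2) * (1 + g * A2) <= Q * D2) by (apply Rmult_le_compat; nra).
    nra. }
  assert (0 <= P) by (pose proof (Rabs_pos (A1 - A2)); lra).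
  assert (0 <= Q) by (pose proof (Rabs_pos (R1 - R2)); lra).
  apply Rle_trans with (g * ((P + Q) * D2) * / (D1 * D2)).
  - apply Rmult_le_compat_r; [apply Rlt_le, Rinv_0_lt_compat; nra| exact HN].
  - replace (g * ((P + Q) * D2) * / (D1 * D2)) with (g * (P + Q) * / D1) by (field; split; apply Rgt_not_eq; lra).
    assert (0 < / D1 <= 1) by (split; [apply Rinv_0_lt_compat; lra| rewrite <- Rinv_1; apply Rinv_le_contravar; lra]).
    assert (0 <= g * (P + Q)) by nra. nra.
Qed.

Lemma int_diff lam beta h1 h2 M u v : 0 < lam -> 0 <= beta -> inK lam h1 -> inK lam h2 ->
  (forall x, 0 <= x <= lam -> Rabs (h1 x - h2 x) <= M) -> 0 <= u -> u <= v -> v <= lam ->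
  Rabs (RInt (G beta h1) u v - RInt (G beta h2) u v) <= beta * M * RInt (phia (1 + beta)) u v.
Proof.
  intros Hl Hb Hh1 Hh2 HM Hu Huv Hv.
  assert (E1 : RInt (fun t => G beta h1 t - G beta h2 t) u v = RInt (G beta h1) u v - RInt (G beta h2) u v).
  { apply (@RInt_minus R_CompleteNormedModule); apply (exG lam); auto; lra. }
  assert (E2 : RInt (fun t => beta * M * phia (1 + beta) t) u v = beta * M * RInt (phia (1 + beta)) u v).
  { apply (@RInt_scal R_CompleteNormedModule). apply ex_phi. lra. }
  rewrite <- E1, <- E2.
  apply rint_abs_le; auto.
  - apply (@ex_RInt_minus R_NormedModule); apply (exG lam); auto; lra.
  - apply (@ex_RInt_scal R_NormedModule). apply ex_phi. lra.
  - intros t Ht. apply (G_diff lam beta h1 h2 M); auto. lra.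
Qed.

Theorem theorem3p6 (lambda gamma beta1 beta : R)
  (Hlambda : 0 < lambda) (Hgamma : 0 < gamma)
  (Hbeta1_pos : 0 < beta1)
  (Hbeta1 : sqrt PI / 2 * gamma * beta1 * sqrt (1 + beta1) * (3 + beta1) = 1)
  (Hbeta : 0 <= beta < beta1) :
  (forall h, inK lambda h -> inK lambda (tau gamma lambda beta h)) /\
  exists k, 0 <= k < 1 /\
    forall h1 h2, inK lambda h1 -> inK lambda h2 ->
      forall M, (forall x, 0 <= x <= lambda -> Rabs (h1 x - h2 x) <= M) ->
      forall x, 0 <= x <= lambda ->
        Rabs (tau gamma lambda beta h1 x - tau gamma lambda beta h2 x) <= k * M.
Proof.
  destruct Hbeta as [Hb0 Hb1].
  split.
  - intros h Hh. apply tau_inK; auto.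
  - set (s := sqrt (1 + beta)). set (s1 := sqrt (1 + beta1)).
    assert (Hs : 0 <= s) by apply sqrt_pos.
    assert (Hss1 : s <= s1) by (apply sqrt_le_1_alt; lra).
    assert (HPI : 3/2 <= sqrt PI).
    { pose proof PI2_3_2. pose proof (sqrt_pos PI). pose proof (sqrt_sqrt PI ltac:(lra)).
      destruct (Rle_dec (3/2) (sqrt PI)); [assumption|]. nra. }
    exists (gamma * beta * (3 + beta) * (3/4) * s). split; [split|].
    + apply Rmult_le_pos; [| lra]. apply Rmult_le_pos; [| lra]. apply Rmult_le_pos; [| lra]. nra.
    + assert (Hq : beta * (3 + beta) <= beta1 * (3 + beta1)) by nra.
      assert (Hq' : beta * (3 + beta) < beta1 * (3 + beta1)) by nra.
      assert (0 < s1) by (apply sqrt_lt_R0; lra).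
      assert (X1 : beta * (3 + beta) * s <= beta * (3 + beta) * s1) by (apply Rmult_le_compat_l; nra).
      assert (X2 : beta * (3 + beta) * s1 < beta1 * (3 + beta1) * s1) by (apply Rmult_lt_compat_r; lra).
      assert (X3 : gamma * (beta * (3 + beta) * s) * (3/4) < gamma * (beta1 * (3 + beta1) * s1) * (sqrt PI / 2)).
      { apply Rle_lt_trans with (gamma * (beta * (3 + beta) * s) * (sqrt PI / 2)).
        - apply Rmult_le_compat_l; [| lra]. apply Rmult_le_pos; [lra| nra].
        - apply Rmult_lt_compat_r; [lra|]. apply Rmult_lt_compat_l; lra. }
      replace (gamma * beta * (3 + beta) * (3/4) * s) with (gamma * (beta * (3 + beta) * s) * (3/4)) by ring.
      replace 1 with (gamma * (beta1 * (3 + beta1) * s1) * (sqrt PI / 2)) by (rewrite <- Hbeta1; unfold s1; ring).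
      exact X3.
    + intros h1 h2 Hh1 Hh2 M HM x Hx.
      assert (HM0 : 0 <= M) by (pose proof (HM 0 ltac:(lra)); pose proof (Rabs_pos (h1 0 - h2 0)); lra).
      rewrite !tau_as by auto.
      pose proof (intG_ge0 lambda beta h1 Hlambda Hb0 Hh1 0 x ltac:(lra) ltac:(lra)).
      pose proof (intG_ge0 lambda beta h1 Hlambda Hb0 Hh1 x lambda ltac:(lra) ltac:(lra)).
      pose proof (intG_ge0 lambda beta h2 Hlambda Hb0 Hh2 0 x ltac:(lra) ltac:(lra)).
      pose proof (intG_ge0 lambda beta h2 Hlambda Hb0 Hh2 x lambda ltac:(lra) ltac:(lra)).
      eapply Rle_trans.
      { apply alg_bound; auto.
        - apply (int_diff lambda beta h1 h2 M); auto; lra.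
        - apply (int_diff lambda beta h1 h2 M); auto; lra. }
      assert (HC : RInt (phia (1 + beta)) 0 x + RInt (phia (1 + beta)) x lambda = RInt (phia (1 + beta)) 0 lambda).
      { apply (@RInt_Chasles R_CompleteNormedModule); apply ex_phi; lra. }
      pose proof (phi_int (1 + beta) lambda ltac:(lra) ltac:(lra)) as HP.
      fold s in HP.
      assert (0 <= beta * M) by nra.
      replace (gamma * (beta * M * RInt (phia (1 + beta)) 0 x + beta * M * RInt (phia (1 + beta)) x lambda))
        with (gamma * (beta * M) * RInt (phia (1 + beta)) 0 lambda) by (rewrite <- HC; ring).
      apply Rle_trans with (gamma * (beta * M) * ((1 + (1 + beta) / 2) * (s / 2) * 3)).
      * apply Rmult_le_compat_l; [nra| exact HP].
      * right. field.
Qed.
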